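(* If a simple protocol $\Pi$ with $m$ memory states is not parsimonious, then there exists a parsimonious protocol $\Pi'$ with at most $m$ memory states such that $U^R(\Pi)\le U^R(\Pi')$.
   Context: Setting. The state of nature is $\theta\in\Theta=\{H,L\}$ with prior $\Pr(\theta=H)=p\in(0,1)$. A sender privately observes $\theta$; a receiver does not. $S$ is a finite signal set; conditional on $\theta$, signals are i.i.d. with distribution $\pi_\theta$ on $S$, where $\pi_\theta(s)>0$ for all $s\in S,\theta\in\Theta$, and $\pi_H\neq\pi_L$. The receiver has a finite set of memory states $M$ and chooses a protocol $\Pi=(f,g,a)$: a transition function $f:M\times S\to\Delta(M)$ ($f(i,s)(j)$ is the probability of moving from memory state $i$ to $j$ after signal $s$), an initial distribution $g\in\Delta(M)$ of $m_0$, and an action rule $a:M\to[0,1]$ (probability of action $H$ if the game ends in that memory state). A sender strategy is $\sigma:M\times\Theta\to[0,1]$, the probability of stopping in the current memory state given $\theta$. Timing: $m_0\sim g$; in each period $t=0,1,\dots$, with current memory state $m_t$, the game ends if $m_t$ is absorbing ($f(m_t,s)(m_t)=1$ for all $s$); otherwise the sender stops with probability $\sigma(m_t,\theta)$, ending the game; if not stopped, a signal $s_t\sim\pi_\theta$ is generated and $m_{t+1}\sim f(m_t,s_t)$. When the game ends in state $m_t$ the receiver takes action $H$ with probability $a(m_t)$ and $L$ otherwise. The receiver's payoff is $1$ if the action equals $\theta$ and $0$ otherwise; the sender's payoff is $1$ if the action is $H$ and $0$ otherwise; there is no discounting; if the game never ends both get $0$. $U^S(\Pi,\sigma),U^R(\Pi,\sigma)$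 denote expected payoffs, $\mathrm{br}(\Pi)=\arg\sup_\sigma U^S(\Pi,\sigma)$ is the set of sender best responses, and $U^R(\Pi):=U^R(\Pi,\sigma)$ for $\sigma\in\mathrm{br}(\Pi)$. Since $\pi_\theta$ has full support, which transitions $i\to j$ have positive probability does not depend on $\theta$; the terms absorbing, transient, recurrent communicating class applied to $\Pi$ refer to the Markov chain on $M$ induced by $f$ with signals drawn from $\pi_\theta$ (sender never stopping), and mean the same for both $\theta$. A protocol is simple if it has exactly two absorbing memory states and all other memory states are transient. A protocol is parsimonious if (i) it has exactly two absorbing memory states, one in which $a=0$ and one in which $a=1$, and (ii) all other memory states are transient with $a=0$. *)

(* Defs.v *)
From HB Require Import structures.
From mathcomp Require Import all_boot all_order all_algebra.
From mathcomp Require Import all_classical all_reals all_analysis.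
Set Implicit Arguments. Unset Strict Implicit. Unset Printing Implicit Defensive.
Import Order.TTheory GRing.Theory Num.Theory.
Import numFieldNormedType.Exports.
Local Open Scope ring_scope.

(* States of nature: [true] = H, [false] = L.  Memory states: 'I_m. *)

Section Model.
Variables (R : realType) (S : finType).

(* sum of a series of reals (only applied to nonnegative, bounded series) *)
Definition rsum (u : nat -> R) : R := limn (series u).

Definition is_distr (T : finType) (d : T -> R) : Prop :=
  (forall x, 0 <= d x) /\ \sum_(x : T) d x = 1.

Definition valid_env (pi : bool -> S -> R) : Prop :=
  (forall th, is_distr (pi th)) /\ (forall th s, 0 < pi th s) /\
  pi true <> pi false.

Record protocol (m : nat) := Protocol {
  ptrans : 'I_m -> S -> 'I_m -> R;
  pinit  : 'I_m -> R;
  pact   : 'I_m -> R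
}.

Variable pi : bool -> S -> R.

Definition valid_protocol m (P : protocol m) : Prop :=
  (forall i s, is_distr (ptrans P i s)) /\ is_distr (pinit P) /\
  (forall i, 0 <= pact P i <= 1).

Definition absorbing m (P : protocol m) (i : 'I_m) : bool :=
  [forall s, ptrans P i s i == 1].

(* transition matrix of the chain when the sender never stops *)
Definition chainP m (P : protocol m) (th : bool) (i j : 'I_m) : R :=
  \sum_(s : S) pi th s * ptrans P i s j.

(* first-passage vectors from i avoiding i:
   fpass 0 j = P(i,j); fpass (n+1) j = sum_{k <> i} fpass n k * P(k,j).
   Probability of first return to i at time n+1 is fpass n i. *)
Fixpoint fpass m (P : protocol m) th (i : 'I_m) (n : nat) (j : 'I_m) : R :=
  match n with
  | 0 => chainP P th i j
  | n'.+1 => \sum_(k : 'I_m | k != i) fpass P th i n' k * chainP P th k j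
  end.

Definition return_prob m (P : protocol m) th (i : 'I_m) : R :=
  rsum (fun n => fpass P th i n i).

(* transient state: probability of ever returning is < 1
   (the same for both theta by full support; we require it for both) *)
Definition transient m (P : protocol m) (i : 'I_m) : Prop :=
  forall th, return_prob P th i < 1.

Definition simple m (P : protocol m) : Prop :=
  #|[set i | absorbing P i]| = 2%N /\
  (forall i, ~~ absorbing P i -> transient P i).

Definition parsimonious m (P : protocol m) : Prop :=
  #|[set i | absorbing P i]| = 2%N /\
  (exists i0 i1, absorbing P i0 /\ absorbing P i1 /\
      pact P i0 = 0 /\ pact P i1 = 1) /\
  (forall i, ~~ absorbing P i -> transient P i /\ pact P i = 0).

(* sender strategies: sigma(i, theta) = probability of stopping *)
Definition strategy m := 'I_m -> bool -> R.

Definition valid_strategy m (sg : strategy m) : Prop :=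
  forall i th, 0 <= sg i th <= 1.

(* alive mass: probability that the game has not ended before t and m_t = j *)
Fixpoint alive m (P : protocol m) (sg : strategy m) th (t : nat) (j : 'I_m) : R :=
  match t with
  | 0 => pinit P j
  | t'.+1 => \sum_(i : 'I_m | ~~ absorbing P i)
               alive P sg th t' i * (1 - sg i th) * chainP P th i j
  end.

(* probability of ending in state i at a given period, given alive there *)
Definition stopw m (P : protocol m) (sg : strategy m) th (i : 'I_m) : R :=
  if absorbing P i then 1 else sg i th.

Definition endprob m (P : protocol m) (sg : strategy m) th (i : 'I_m) : R :=
  rsum (fun t => alive P sg th t i * stopw P sg th i).

Definition probH m (P : protocol m) (sg : strategy m) th : R :=
  \sum_(i : 'I_m) endprob P sg th i * pact P i.

(* probability of action L (and the game ending) given theta *)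
Definition probL m (P : protocol m) (sg : strategy m) th : R :=
  \sum_(i : 'I_m) endprob P sg th i * (1 - pact P i).

Definition US (p : R) m (P : protocol m) (sg : strategy m) : R :=
  p * probH P sg true + (1 - p) * probH P sg false.

Definition UR (p : R) m (P : protocol m) (sg : strategy m) : R :=
  p * probH P sg true + (1 - p) * probL P sg false.

Definition best_response (p : R) m (P : protocol m) (sg : strategy m) : Prop :=
  valid_strategy sg /\
  forall sg', valid_strategy sg' -> US p P sg' <= US p P sg.

End Model.

(* Main.v *)
Require Import Defs.
From HB Require Import structures.
From mathcomp Require Import all_boot all_order all_algebra.
From mathcomp Require Import all_classical all_reals all_analysis.
From mathcomp Require Import ring lra.
Import Order.TTheory GRing.Theory Num.Theory.
Import numFieldNormedType.Exports.
Local Open Scope classical_set_scope.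
Local Open Scope ring_scope.
Set Implicit Arguments. Unset Strict Implicit. Unset Printing Implicit Defensive.

Section Lim.
Variable R : realType.
Implicit Types u v : nat -> R.

Definition bnd u := (forall n, 0 <= u n) /\ exists B, forall n, series u n <= B.

Lemma series_nd u : (forall n, 0 <= u n) -> nondecreasing_seq (series u).
Proof. by move=> h; apply: nondecreasing_series => n _ _; exact: h. Qed.

Lemma bnd_cvg u : bnd u -> cvgn (series u).
Proof.
move=> [h0 [B hB]]; apply: nondecreasing_is_cvgn; first exact: series_nd.
by exists B => _ [n _ <-]; exact: hB.
Qed.

Lemma bnd_sums u : bnd u -> series u @ \oo --> rsum u.
Proof. by move/bnd_cvg. Qed.

Lemma bnd_le u n : bnd u -> series u n <= rsum u.
Proof. move=> hb; apply: nondecreasing_cvgn_le; [exact: series_nd hb.1|exact: bnd_cvg]. Qed.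

Lemma rsum_ub u B : bnd u -> (forall n, series u n <= B) -> rsum u <= B.
Proof. move=> hb hB; apply: (cvgr_to_le (bnd_sums hb)); by near=> n; exact: hB.
Unshelve. all: by end_near. Qed.

Lemma rsum_ge0 u : bnd u -> 0 <= rsum u.
Proof. by move=> hb; apply: le_trans (bnd_le 0 hb); rewrite /series /= big_geq. Qed.

Lemma rsum_le_shift u v k : bnd u -> bnd v ->
  (forall N, series v N <= series u (N + k)%N) -> rsum v <= rsum u.
Proof.
move=> hu hv h; apply: rsum_ub => // N; apply: le_trans (h N) _; exact: bnd_le.
Qed.

Lemma bnd_le_bnd u v : bnd v -> (forall n, 0 <= u n) -> (forall n, u n <= v n) -> bnd u.
Proof.
move=> [h0 [B hB]] hu huv; split => //; exists B => n; apply: le_trans (hB n).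
by apply: ler_sum => i _; exact: huv.
Qed.

Lemma cvg_bigsum (I : Type) (r : seq I) (P : pred I) (u : I -> nat -> R) (l : I -> R) :
  (forall i, u i @ \oo --> l i) ->
  (fun n => \sum_(i <- r | P i) u i n) @ \oo --> \sum_(i <- r | P i) l i.
Proof.
move=> h; elim: r => [|x r IH].
  rewrite big_nil; under eq_fun do rewrite big_nil; exact: cvg_cst.
rewrite big_cons; under eq_fun do rewrite big_cons.
case: (P x) => //; exact: cvgD.
Qed.

Lemma series_bigsum (I : finType) (P : pred I) (u : I -> nat -> R) n :
  series (fun t => \sum_(i | P i) u i t) n = \sum_(i | P i) series (u i) n.
Proof. by rewrite /series /= exchange_big. Qed.

Lemma bnd_bigsum (I : finType) (P : pred I) (u : I -> nat -> R) :
  (forall i, bnd (u i)) -> bnd (fun t => \sum_(i | P i) u i t).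
Proof.
move=> h; split; first by move=> n; apply: sumr_ge0 => i _; exact: (h i).1.
exists (\sum_(i | P i) rsum (u i)) => n; rewrite series_bigsum.
by apply: ler_sum => i _; exact: bnd_le.
Qed.

Lemma rsum_bigsum (I : finType) (P : pred I) (u : I -> nat -> R) :
  (forall i, bnd (u i)) ->
  rsum (fun t => \sum_(i | P i) u i t) = \sum_(i | P i) rsum (u i).
Proof.
move=> h; apply: cvg_lim => //.
have -> : series (fun t => \sum_(i | P i) u i t) = fun n => \sum_(i | P i) series (u i) n.
  by apply: funext => n; exact: series_bigsum.
by apply: cvg_bigsum => i; exact: bnd_sums.
Qed.

Lemma bnd_scale u c : bnd u -> 0 <= c -> bnd (fun t => u t * c).
Proof.
move=> [h0 [B hB]] hc; split; first by move=> n; rewrite mulr_ge0.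
exists (B * c) => n; rewrite /series /= -big_distrl /=; apply: ler_wpM2r => //; exact: (hB n).
Qed.

Lemma rsum_scale u c : bnd u -> rsum (fun t => u t * c) = rsum u * c.
Proof.
move=> hb; apply: cvg_lim => //.
have -> : series (fun t => u t * c) = fun n => series u n * c.
  by apply: funext => n; rewrite /series /= big_distrl.
exact: cvgMr_tmp (bnd_sums hb).
Qed.

Lemma bnd_terms0 u : bnd u -> u @ \oo --> 0.
Proof. by move/bnd_cvg; exact: cvg_series_cvg_0. Qed.

End Lim.

Section Gen.
Variables (R : realType) (S : finType) (pi : bool -> S -> R).
Hypothesis Henv : valid_env pi.
Variables (m : nat) (Q : protocol R S m).
Hypothesis hQ : valid_protocol Q.

Lemma pi_ge0 th s : 0 <= pi th s.
Proof. exact: ((Henv.1 th).1 s). Qed.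
Lemma pi_sum th : \sum_s pi th s = 1.
Proof. exact: (Henv.1 th).2. Qed.

Lemma tr_ge0 i s j : 0 <= ptrans Q i s j.
Proof. exact: ((hQ.1 i s).1 j). Qed.
Lemma tr_sum i s : \sum_j ptrans Q i s j = 1.
Proof. exact: (hQ.1 i s).2. Qed.

Lemma ch_ge0 th i j : 0 <= chainP pi Q th i j.
Proof. by apply: sumr_ge0 => s _; rewrite mulr_ge0 ?pi_ge0 ?tr_ge0. Qed.

Lemma ch_sum th i : \sum_j chainP pi Q th i j = 1.
Proof.
rewrite /chainP exchange_big /= -(pi_sum th); apply: eq_bigr => s _.
by rewrite -mulr_sumr tr_sum mulr1.
Qed.

Lemma tr_abs i s j : absorbing Q i -> ptrans Q i s j = (j == i)%:R.
Proof.
move=> /forallP /(_ s) /eqP hi.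
have := tr_sum i s; rewrite (bigD1 i) //= hi -{2}(addr0 1) => /addrI.
move=> h0.
have [->|ne] := eqVneq j i; first by rewrite hi.
by rewrite (psumr_eq0P _ h0) // => k _; exact: tr_ge0.
Qed.

Lemma ch_abs th i j : absorbing Q i -> chainP pi Q th i j = (j == i)%:R.
Proof.
move=> ha; rewrite /chainP; under eq_bigr do rewrite tr_abs //.
by rewrite -mulr_suml pi_sum mul1r.
Qed.

Variable sg : strategy R m.
Hypothesis hsg : valid_strategy sg.

Lemma sg_ge0 i th : 0 <= sg i th. Proof. exact: (andP (hsg i th)).1. Qed.
Lemma sg_le1 i th : sg i th <= 1. Proof. exact: (andP (hsg i th)).2. Qed.

Lemma stopw_ge0 th i : 0 <= stopw Q sg th i.
Proof. by rewrite /stopw; case: ifP => // _; exact: sg_ge0. Qed.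
Lemma stopw_le1 th i : stopw Q sg th i <= 1.
Proof. by rewrite /stopw; case: ifP => // _; exact: sg_le1. Qed.

Lemma init_ge0 j : 0 <= pinit Q j. Proof. exact: (hQ.2.1.1 j). Qed.
Lemma init_sum : \sum_j pinit Q j = 1. Proof. exact: hQ.2.1.2. Qed.

Lemma alive_ge0 th t j : 0 <= alive pi Q sg th t j.
Proof.
elim: t j => [|t IH] j /=; first exact: init_ge0.
apply: sumr_ge0 => i _; rewrite !mulr_ge0 ?ch_ge0 ?IH //.
by rewrite subr_ge0 sg_le1.
Qed.

Lemma alive_le0 th t j : alive pi Q sg th t j <= alive pi Q (fun _ _ => 0) th t j.
Proof.
elim: t j => [|t IH] j //=.
apply: ler_sum => i _; rewrite subr0 mulr1; apply: ler_wpM2r; first exact: ch_ge0.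
apply: le_trans (IH i); rewrite ler_piMr ?alive_ge0 //.
by rewrite lerBlDr lerDl sg_ge0.
Qed.

Definition Et th t := \sum_i alive pi Q sg th t i * stopw Q sg th i.

Lemma alive_sumS th t : \sum_j alive pi Q sg th t.+1 j =
  \sum_j alive pi Q sg th t j - Et th t.
Proof.
rewrite /= exchange_big /=.
have -> : \sum_(i | ~~ absorbing Q i) \sum_j
   alive pi Q sg th t i * (1 - sg i th) * chainP pi Q th i j =
   \sum_(i | ~~ absorbing Q i) alive pi Q sg th t i * (1 - sg i th).
  by apply: eq_bigr => i _; rewrite -mulr_sumr ch_sum mulr1.
rewrite /Et (bigID (fun i => absorbing Q i) xpredT (fun i => alive pi Q sg th t i)) /=.
rewrite (bigID (fun i => absorbing Q i) xpredT (fun i => alive pi Q sg th t i * _)) /=.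
rewrite opprD addrACA.
have -> : \sum_(i | absorbing Q i) alive pi Q sg th t i -
   \sum_(i | absorbing Q i) alive pi Q sg th t i * stopw Q sg th i = 0.
  apply/eqP; rewrite subr_eq0; apply/eqP; apply: eq_bigr => i hi.
  by rewrite /stopw hi mulr1.
rewrite add0r -sumrB; apply: eq_bigr => i hi.
by rewrite /stopw (negbTE hi) mulrBr mulr1.
Qed.

Lemma conserv th N : series (Et th) N + \sum_j alive pi Q sg th N j = 1.
Proof.
elim: N => [|N IH]; first by rewrite /series /= big_geq // add0r init_sum.
by rewrite seriesSr alive_sumS -IH; ring.
Qed.

Lemma Et_ge0 th t : 0 <= Et th t.
Proof. by apply: sumr_ge0 => i _; rewrite mulr_ge0 ?alive_ge0 ?stopw_ge0. Qed.

Lemma series_Et_le1 th N : series (Et th) N <= 1.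
Proof.
rewrite -(conserv th N) lerDl; apply: sumr_ge0 => j _; exact: alive_ge0.
Qed.

Lemma bnd_Et th : bnd (Et th).
Proof. split; [exact: Et_ge0|exists 1; exact: series_Et_le1]. Qed.

Lemma bnd_end th i : bnd (fun t => alive pi Q sg th t i * stopw Q sg th i).
Proof.
apply: (bnd_le_bnd (bnd_Et th)) => n; first by rewrite mulr_ge0 ?alive_ge0 ?stopw_ge0.
rewrite /Et (bigD1 i) //= lerDl; apply: sumr_ge0 => k _.
by rewrite mulr_ge0 ?alive_ge0 ?stopw_ge0.
Qed.

Lemma endprob_ge0 th i : 0 <= endprob pi Q sg th i.
Proof. exact: rsum_ge0 (bnd_end th i). Qed.

Lemma sum_endprob th : \sum_i endprob pi Q sg th i = rsum (Et th).
Proof. by rewrite /endprob -rsum_bigsum //; move=> i; exact: bnd_end. Qed.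

Lemma sum_endprob_le1 th : \sum_i endprob pi Q sg th i <= 1.
Proof. rewrite sum_endprob; apply: rsum_ub; [exact: bnd_Et|exact: series_Et_le1]. Qed.

End Gen.

Lemma conv_sum (R : realType) (a b : nat -> R) N :
  \sum_(n < N) \sum_(k < n.+1) a k * b (n - k)%N =
  \sum_(k < N) a k * series b (N - k)%N.
Proof.
elim: N => [|N IH]; first by rewrite !big_ord0.
rewrite big_ord_recr /= IH.
have -> : \sum_(k < N.+1) a k * series b (N.+1 - k)%N =
   \sum_(k < N.+1) (a k * series b (N - k)%N + a k * b (N - k)%N).
  apply: eq_bigr => k _; have hk : (k <= N)%N by rewrite -ltnS. 
  rewrite (subSn hk) seriesSr; ring.
rewrite big_split /=; congr (_ + _).
rewrite big_ord_recr /= subnn.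
by rewrite [series b 0]/series /= big_geq // mulr0 addr0.
Qed.

Section Trans.
Variables (R : realType) (S : finType) (pi : bool -> S -> R).
Hypothesis Henv : valid_env pi.
Variables (m : nat) (Q : protocol R S m).
Hypothesis hQ : valid_protocol Q.
Variable th : bool.

Definition ch := chainP pi Q th.
Definition step (x : 'I_m -> R) : 'I_m -> R := fun l => \sum_k x k * ch k l.
Definition prop x n := iter n step x.
Fixpoint tab (x : 'I_m -> R) (j : 'I_m) n : 'I_m -> R :=
  match n with
  | 0 => x
  | n'.+1 => fun l => \sum_(k | k != j) tab x j n' k * ch k l
  end.
Definition delta (j : 'I_m) : 'I_m -> R := fun l => (l == j)%:R.

Lemma ch0 i j : 0 <= ch i j. Proof. exact: ch_ge0. Qed.

Lemma prop_ge0 x n l : (forall i, 0 <= x i) -> 0 <= prop x n l.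
Proof.
move=> hx; elim: n l => [|n IH] l //=.
by apply: sumr_ge0 => i _; rewrite mulr_ge0 ?ch0 ?IH.
Qed.

Lemma tab_ge0 x j n l : (forall i, 0 <= x i) -> 0 <= tab x j n l.
Proof.
move=> hx; elim: n l => [|n IH] l //=.
by apply: sumr_ge0 => i _; rewrite mulr_ge0 ?ch0 ?IH.
Qed.

Lemma prop_delta1 j : prop (delta j) 1 = fun l => ch j l.
Proof.
apply: funext => l; rewrite /= /step (bigD1 j) //= /delta eqxx mul1r big1 ?addr0 //.
by move=> i /negbTE ->; rewrite mul0r.
Qed.

Lemma propS x n : prop (step x) n = prop x n.+1.
Proof. by rewrite /prop iterSr. Qed.

Lemma prop_row j n : prop (fun l => ch j l) n = prop (delta j) n.+1.
Proof. by rewrite -prop_delta1 /= propS. Qed.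

Lemma ident x j n l : prop x n l =
  tab x j n l + \sum_(k < n) tab x j k j * prop (delta j) (n - k)%N l.
Proof.
elim: n l => [|n IH] l; first by rewrite big_ord0 addr0.
rewrite [LHS]/= -/(prop x n) /step.
under eq_bigr do rewrite IH mulrDl.
rewrite big_split /=.
have E : \sum_i (\sum_(k < n) tab x j k j * prop (delta j) (n - k)%N i) * ch i l =
    \sum_(k < n) tab x j k j * prop (delta j) (n.+1 - k)%N l.
  under eq_bigr do rewrite big_distrl /=.
  rewrite exchange_big /=; apply: eq_bigr => k _.
  have hk : (k <= n)%N by exact: ltnW.
  rewrite (subSn hk) /= /step -/(prop (delta j) (n - k)) mulr_sumr.
  by apply: eq_bigr => i _; rewrite mulrA.
rewrite E (bigD1 j) //= [in RHS]big_ord_recr /= subSnn prop_delta1 /=; ring.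
Qed.

Lemma tab_cons x j N : (forall i, 0 <= x i) ->
  \sum_(k < N) tab x j k j + \sum_l tab x j N l = \sum_l x l.
Proof.
move=> hx; elim: N => [|N IH]; first by rewrite big_ord0 add0r.
rewrite big_ord_recr /= -IH -addrA; congr (_ + _).
rewrite exchange_big /=.
under eq_bigr do rewrite -mulr_sumr ch_sum // mulr1.
by rewrite [X in _ = X](bigD1 j) //= addrC.
Qed.

Lemma tab_sum_le x j N : (forall i, 0 <= x i) ->
  \sum_(k < N) tab x j k j <= \sum_l x l.
Proof.
move=> hx; rewrite -(tab_cons j N hx) lerDl; apply: sumr_ge0 => l _.
exact: tab_ge0.
Qed.

Lemma visits x j N : (forall i, 0 <= x i) ->
  \sum_(n < N) prop x n j =
  \sum_(k < N) tab x j k j * series (fun v => prop (delta j) v j) (N - k)%N.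
Proof.
move=> hx; rewrite -(conv_sum (fun k => tab x j k j) (fun v => prop (delta j) v j)); apply: eq_bigr => n _.
rewrite (ident x j) big_ord_recr /= subnn /= /delta eqxx mulr1 addrC.
by [].
Qed.

Lemma tab_fpass j n : tab (fun l => ch j l) j n = fpass pi Q th j n.
Proof.
elim: n => [|n IH] //=; apply: funext => l; rewrite IH.
by [].
Qed.

Lemma row_ge0 j i : 0 <= ch j i. Proof. exact: ch0. Qed.

Lemma series_ord (u : nat -> R) N : series u N = \sum_(k < N) u k.
Proof. by rewrite /series /= big_mkord. Qed.

Lemma bnd_fpass j : bnd (fun n => fpass pi Q th j n j).
Proof.
split; first by move=> n; rewrite -tab_fpass; apply: tab_ge0; exact: row_ge0.
exists 1 => N; rewrite series_ord.
under eq_bigr do rewrite -tab_fpass.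
rewrite -(ch_sum Henv hQ th j); exact: (tab_sum_le j N (row_ge0 j)).
Qed.

Lemma delta_ge0 j i : 0 <= delta j i.
Proof. by rewrite /delta ler0n. Qed.

Definition qv j := fun v => prop (delta j) v j.

Lemma qv_ge0 j v : 0 <= qv j v.
Proof. exact: prop_ge0 (delta_ge0 j). Qed.

Lemma Qbound j N : return_prob pi Q th j < 1 ->
  series (qv j) N <= 1 / (1 - return_prob pi Q th j).
Proof.
set r := return_prob pi Q th j => hr.
have r0 : 0 <= r by apply: rsum_ge0; exact: bnd_fpass.
have mono : forall a b, (a <= b)%N -> series (qv j) a <= series (qv j) b.
  by move=> a b hab; apply: (series_nd (qv_ge0 j)).
have step1 : series (qv j) N.+1 <= 1 + r * series (qv j) N.
  have q0 : qv j 0 = 1 by rewrite /qv /= /delta eqxx.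
  have qS : forall i : 'I_N, qv j (bump 0 i) = prop (fun l => ch j l) i j.
    by move=> i; rewrite /bump /= add1n prop_row.
  rewrite series_ord big_ord_recl q0; apply: lerD => //.
  under eq_bigr do rewrite qS.
  rewrite (visits j N (row_ge0 j)).
  apply: le_trans (_ : \sum_(k < N) tab (fun l => ch j l) j k j * series (qv j) N <= _).
    apply: ler_sum => k _; apply: ler_wpM2l; first exact: tab_ge0 (row_ge0 j).
    by apply: mono; exact: leq_subr.
  rewrite -big_distrl /=; apply: ler_wpM2r.
    by apply: le_trans (mono 0%N N _) => //; rewrite /series /= big_geq.
  under eq_bigr do rewrite tab_fpass.
  rewrite -(series_ord (fun k => fpass pi Q th j k j)); exact: bnd_le (bnd_fpass j).
have step2 : series (qv j) N.+1 * (1 - r) <= 1.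
  have := mono N N.+1 (leqnSn N).
  have h0 : 0 <= series (qv j) N by apply: le_trans (mono 0%N N _) => //; rewrite /series /= big_geq.
  move: step1; set a := series (qv j) N; set b := series (qv j) N.+1 => s1 s2.
  have : r * a <= r * b by apply: ler_wpM2l.
  move=> s3; rewrite mulrBr mulr1; lra.
rewrite ler_pdivlMr ?subr_gt0 //.
apply: le_trans step2; apply: ler_wpM2r; first by rewrite subr_ge0 ltW.
exact: mono.
Qed.

Lemma bnd_prop x j : (forall i, 0 <= x i) -> \sum_l x l <= 1 ->
  return_prob pi Q th j < 1 -> bnd (fun n => prop x n j).
Proof.
move=> hx hs hr; split; first by move=> n; exact: prop_ge0.
exists (1 / (1 - return_prob pi Q th j)) => N; rewrite series_ord (visits j N hx).
apply: le_trans (_ : \sum_(k < N) tab x j k j * (1 / (1 - return_prob pi Q th j)) <= _).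
  apply: ler_sum => k _; apply: ler_wpM2l; first exact: tab_ge0.
  exact: Qbound.
rewrite -big_distrl /= -[X in _ <= X]mul1r; apply: ler_wpM2r.
  by rewrite divr_ge0 // subr_ge0 ltW.
exact: le_trans (tab_sum_le j N hx) hs.
Qed.

End Trans.

Section Term.
Variables (R : realType) (S : finType) (pi : bool -> S -> R).
Hypothesis Henv : valid_env pi.
Variables (m : nat) (Q : protocol R S m).
Hypothesis hQ : valid_protocol Q.
Variable sg : strategy R m.
Hypothesis hsg : valid_strategy sg.

Lemma alive_le_prop th t j : alive pi Q sg th t j <= prop pi Q th (pinit Q) t j.
Proof.
elim: t j => [|t IH] j //=.
rewrite big_mkcond /=; apply: ler_sum => i _.
case: ifP => _; last by apply: mulr_ge0; [exact: prop_ge0 (init_ge0 hQ)|exact: ch_ge0].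
apply: ler_wpM2r; first exact: ch_ge0.
apply: le_trans (IH i); rewrite ler_piMr ?(alive_ge0 Henv hQ hsg) //.
by rewrite lerBlDr lerDl (sg_ge0 hsg).
Qed.

Lemma termination th : (forall j, ~~ absorbing Q j -> return_prob pi Q th j < 1) ->
  \sum_i endprob pi Q sg th i = 1.
Proof.
move=> htr; rewrite (sum_endprob Henv hQ hsg); apply: cvg_lim => //.
have -> : series (Et pi Q sg th) = fun N => 1 - \sum_j alive pi Q sg th N j.
  apply: funext => N; rewrite -(conserv Henv hQ sg th N); ring.
rewrite -[X in _ --> X]subr0; apply: cvgB; first exact: cvg_cst.
suff H : forall j, (fun N => alive pi Q sg th N j) @ \oo --> (0 : R).
  by have := @cvg_bigsum _ _ (index_enum 'I_m) xpredT _ _ H; rewrite big1.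
move=> j.
have [ha|hna] := boolP (absorbing Q j).
  have := bnd_terms0 (bnd_end Henv hQ hsg th j).
  by rewrite /stopw ha; under eq_fun do rewrite mulr1.
apply: (@squeeze_cvgr _ _ _ _ (fun _ => 0) (fun n => prop pi Q th (pinit Q) n j)).
- near=> n; rewrite (alive_ge0 Henv hQ hsg) /=; exact: alive_le_prop.
- exact: cvg_cst.
apply: bnd_terms0; apply: bnd_prop => //; first exact: init_ge0 hQ.
  by rewrite (init_sum hQ).
exact: htr.
Unshelve. all: by end_near.
Qed.

End Term.

Section BR.
Variables (R : realType) (S : finType) (pi : bool -> S -> R).
Hypothesis Henv : valid_env pi.
Variables (m : nat) (Q : protocol R S m).
Hypothesis hQ : valid_protocol Q.

Lemma alive_ext (s1 s2 : strategy R m) th :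
  (forall i, s1 i th = s2 i th) -> alive pi Q s1 th = alive pi Q s2 th.
Proof.
move=> h; apply: funext => t; elim: t => [|t IH] //=; apply: funext => j.
by apply: eq_bigr => i _; rewrite IH h.
Qed.

Lemma probH_ext (s1 s2 : strategy R m) th :
  (forall i, s1 i th = s2 i th) -> probH pi Q s1 th = probH pi Q s2 th.
Proof.
move=> h; rewrite /probH /endprob (alive_ext h) /stopw.
by apply: eq_bigr => i _; under eq_fun do rewrite h.
Qed.

Definition mix (s1 s2 : strategy R m) : strategy R m :=
  fun i th => if th then s1 i true else s2 i false.

Lemma mix_valid s1 s2 : valid_strategy s1 -> valid_strategy s2 ->
  valid_strategy (mix s1 s2).
Proof. by move=> h1 h2 i [] /=. Qed.

Variable p : R.
Hypothesis hp : 0 < p < 1.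

Lemma br_le (sg s : strategy R m) th : best_response pi p Q sg -> valid_strategy s ->
  probH pi Q s th <= probH pi Q sg th.
Proof.
move=> [hv hb] hs; case/andP: hp => p0 p1; case: th.
- have := hb (mix s sg) (mix_valid hs hv); rewrite /US.
  rewrite (probH_ext (s2 := s) (th := true)) // (probH_ext (s1 := mix s sg) (s2 := sg) (th := false)) //.
  rewrite lerD2r => h; by rewrite -(ler_pM2l p0).
- have := hb (mix sg s) (mix_valid hv hs); rewrite /US.
  rewrite (probH_ext (s2 := sg) (th := true)) // (probH_ext (s1 := mix sg s) (s2 := s) (th := false)) //.
  by rewrite lerD2l ler_pM2l // subr_gt0.
Qed.

End BR.

Section DB.
Variables (R : realType) (S : finType) (pi : bool -> S -> R).
Hypothesis Henv : valid_env pi.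
Variables (m : nat) (Q : protocol R S m).
Hypothesis hQ : valid_protocol Q.
Variable B : 'I_m.
Hypothesis hB : absorbing Q B.
Hypothesis hact : forall i, pact Q i = (i == B)%:R.

Definition zs : strategy R m := fun _ _ => 0.
Lemma zs_valid : valid_strategy zs.
Proof. by move=> i th; rewrite /zs lexx ler01. Qed.

Lemma Esum_B s th t : \sum_i alive pi Q s th t i * stopw Q s th i * pact Q i =
  alive pi Q s th t B.
Proof.
rewrite (bigD1 B) //= hact eqxx /stopw hB !mulr1 big1 ?addr0 //.
by move=> i /negbTE hi; rewrite hact hi mulr0.
Qed.

Lemma probH_B s th : probH pi Q s th = rsum (fun t => alive pi Q s th t B).
Proof.
rewrite /probH (bigD1 B) //= hact eqxx mulr1 big1 ?addr0.
  by rewrite /endprob /stopw hB; under eq_fun do rewrite mulr1.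
by move=> i /negbTE hi; rewrite hact hi mulr0.
Qed.

Lemma bnd_aliveB s th : valid_strategy s -> bnd (fun t => alive pi Q s th t B).
Proof.
move=> hs; have := bnd_end Henv hQ hs th B.
by rewrite /stopw hB; under eq_fun do rewrite mulr1.
Qed.

Lemma probH_le0 s th : valid_strategy s -> probH pi Q s th <= probH pi Q zs th.
Proof.
move=> hs; rewrite !probH_B; apply: (rsum_le_shift (k := 0)).
- exact: bnd_aliveB zs_valid.
- exact: bnd_aliveB.
move=> N; rewrite addn0; apply: ler_sum => t _; exact: alive_le0.
Qed.

Lemma br_zero p : 0 < p < 1 -> best_response pi p Q zs.
Proof.
move=> /andP[p0 p1]; split; first exact: zs_valid.
move=> s hs; rewrite /US; apply: lerD; apply: ler_wpM2l.
- exact: ltW.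
- exact: probH_le0.
- by rewrite subr_ge0 ltW.
- exact: probH_le0.
Qed.

Definition uL s th t := \sum_i alive pi Q s th t i * stopw Q s th i * (1 - pact Q i).

Lemma act_ge0 i : 0 <= pact Q i. Proof. by rewrite hact ler0n. Qed.
Lemma act_le1 i : 1 - pact Q i >= 0. Proof. by rewrite hact subr_ge0 lern1 leq_b1. Qed.

Lemma bnd_uL s th : valid_strategy s -> bnd (uL s th).
Proof.
move=> hs; apply: bnd_bigsum => i; apply: bnd_scale; last exact: act_le1.
exact: bnd_end.
Qed.

Lemma probL_rsum s th : valid_strategy s -> probL pi Q s th = rsum (uL s th).
Proof.
move=> hs; rewrite /uL rsum_bigsum; last first.
  by move=> i; apply: bnd_scale; [exact: bnd_end|exact: act_le1].
by apply: eq_bigr => i _; rewrite rsum_scale //; exact: bnd_end.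
Qed.

Lemma uL_eq s th t : uL s th t = Et pi Q s th t - alive pi Q s th t B.
Proof.
rewrite /uL /Et -(Esum_B s th t) -sumrB; apply: eq_bigr => i _; ring.
Qed.

Lemma probL_mono s th : valid_strategy s -> probL pi Q zs th <= probL pi Q s th.
Proof.
move=> hs; rewrite !probL_rsum //; last exact: zs_valid.
apply: (rsum_le_shift (k := 0)); [exact: bnd_uL|exact: bnd_uL zs_valid|].
move=> N; rewrite addn0.
have -> : series (uL zs th) N = series (Et pi Q zs th) N - series (fun t => alive pi Q zs th t B) N.
  by rewrite /series /= -sumrB; apply: eq_bigr => t _; rewrite uL_eq.
have -> : series (uL s th) N = series (Et pi Q s th) N - series (fun t => alive pi Q s th t B) N.
  by rewrite /series /= -sumrB; apply: eq_bigr => t _; rewrite uL_eq.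
apply: lerB.
- have e1 := conserv Henv hQ s th N; have e2 := conserv Henv hQ zs th N.
  have : \sum_j alive pi Q s th N j <= \sum_j alive pi Q zs th N j.
    by apply: ler_sum => j _; exact: alive_le0.
  lra.
- by apply: ler_sum => t _; exact: alive_le0.
Qed.

End DB.

Section Cons.
Variables (R : realType) (S : finType) (pi : bool -> S -> R).
Hypothesis Henv : valid_env pi.
Variables (m : nat) (P : protocol R S m).
Hypothesis hP : valid_protocol P.
Variables (A B : 'I_m).
Hypothesis hA : absorbing P A.
Hypothesis hB : absorbing P B.
Hypothesis hAB : A != B.
Variable sig : 'I_m -> R.
Hypothesis hsig : forall i, 0 <= sig i <= 1.
Variable lab : 'I_m -> bool.

Definition tgt (x : bool) := if x then B else A.
Definition route l := if absorbing P l then tgt (lab l) else l.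

Definition P' : protocol R S m := Protocol
  (fun k s j => if absorbing P k then (j == k)%:R else
     sig k * (j == tgt (lab k))%:R + (1 - sig k) * \sum_(l | route l == j) ptrans P k s l)
  (fun j => \sum_(l | route l == j) pinit P l)
  (fun j => (j == B)%:R).

Lemma sig0 i : 0 <= sig i. Proof. by case/andP: (hsig i). Qed.
Lemma sig1 i : sig i <= 1. Proof. by case/andP: (hsig i). Qed.

Lemma tgt_abs x : absorbing P (tgt x). Proof. by case: x. Qed.

Lemma partition (f : 'I_m -> R) : \sum_j \sum_(l | route l == j) f l = \sum_l f l.
Proof.
rewrite (exchange_big_dep xpredT) //=; apply: eq_bigr => l _.
by rewrite (big_pred1 (route l)) // => j; rewrite /= eq_sym.
Qed.

Lemma route_nonabs j l : ~~ absorbing P j -> (route l == j) = (l == j).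
Proof.
move=> hj; rewrite /route; case: ifP => hl.
  apply/eqP/eqP => [e|e]; last by rewrite -e hl in hj.
  by move: hj; rewrite -e tgt_abs.
by [].
Qed.

Lemma route_tgt x l : (route l == tgt x) = absorbing P l && (lab l == x).
Proof.
rewrite /route; case: ifP => hl /=.
  by case: (lab l); case: x => //=; rewrite ?eqxx // ?(negbTE hAB) // eq_sym (negbTE hAB).
by apply/negbTE/eqP => e; move: (tgt_abs x); rewrite -e hl.
Qed.

Lemma sum_route_nonabs j (f : 'I_m -> R) : ~~ absorbing P j ->
  \sum_(l | route l == j) f l = f j.
Proof.
move=> hj; rewrite (big_pred1 j) // => l; rewrite /= route_nonabs //.
Qed.

Lemma tgt_neq j x : ~~ absorbing P j -> (j == tgt x) = false.
Proof. by move=> hj; apply/negbTE/eqP => e; move: hj; rewrite e tgt_abs. Qed.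

Lemma sum_delta (k : 'I_m) : \sum_j (j == k)%:R = 1 :> R.
Proof.
rewrite (bigD1 k) //= eqxx big1 ?addr0 // => j /negbTE -> //.
Qed.

Lemma validP' : valid_protocol P'.
Proof.
split; [|split].
- move=> k s; split.
    move=> j /=; case: ifP => _; first by rewrite ler0n.
    apply: addr_ge0; first by rewrite mulr_ge0 ?sig0 ?ler0n.
    apply: mulr_ge0; first by rewrite subr_ge0 sig1.
    by apply: sumr_ge0 => l _; exact: (tr_ge0 hP).
  rewrite /=; case hk: (absorbing P k) => /=; first exact: sum_delta.
  rewrite big_split /= -!mulr_sumr sum_delta partition (tr_sum hP); ring.
- split; first by move=> j /=; apply: sumr_ge0 => l _; exact: (init_ge0 hP).
  by rewrite /= partition (init_sum hP).
- by move=> i /=; rewrite ler0n lern1 leq_b1.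
Qed.

Lemma absP' k : absorbing P' k = absorbing P k.
Proof.
have [hk|hk] := boolP (absorbing P k).
  by apply/forallP => s; rewrite /= hk eqxx.
apply/negbTE/negP => /forallP hab; have hk2 := hk; move/negP: hk; apply.
apply/forallP => s; have := hab s; rewrite /= (negbTE hk2) tgt_neq // mulr0 add0r.
rewrite sum_route_nonabs // => /eqP h.
have f1 : ptrans P k s k <= 1.
  rewrite -(tr_sum hP k s) (bigD1 k) //= lerDl; apply: sumr_ge0 => l _; exact: (tr_ge0 hP).
have f0 := tr_ge0 hP k s k; have := sig0 k; have := sig1 k => s1 s0.
apply/eqP; nra.
Qed.

Lemma chP' th k j : ~~ absorbing P k ->
  chainP pi P' th k j = sig k * (j == tgt (lab k))%:R +
     (1 - sig k) * \sum_(l | route l == j) chainP pi P th k l.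
Proof.
move=> hk; rewrite /chainP /= (negbTE hk).
under eq_bigr do rewrite mulrDr.
rewrite big_split /=; congr (_ + _).
  by rewrite -big_distrl /= (pi_sum Henv) mul1r.
rewrite [in RHS]exchange_big /= [in RHS]mulr_sumr; apply: eq_bigr => s _.
by rewrite mulrCA mulr_sumr.
Qed.

Lemma chP'_nn th k j : ~~ absorbing P k -> ~~ absorbing P j ->
  chainP pi P' th k j = (1 - sig k) * chainP pi P th k j.
Proof.
move=> hk hj; rewrite chP' // tgt_neq // mulr0 add0r sum_route_nonabs //.
Qed.

Lemma fpass'_le th k n j : ~~ absorbing P k -> ~~ absorbing P j ->
  fpass pi P' th k n j <= fpass pi P th k n j.
Proof.
move=> hk; elim: n j => [|n IH] j hj /=.
  rewrite chP'_nn // ler_piMl ?(ch_ge0 Henv hP) //.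
  by rewrite lerBlDr lerDl sig0.
apply: ler_sum => l _.
have hf' : 0 <= fpass pi P' th k n l.
  by rewrite -(tab_fpass pi P' th k n); apply: (tab_ge0 Henv validP') => i; exact: (ch_ge0 Henv validP').
have [hl|hl] := boolP (absorbing P l).
  rewrite (ch_abs Henv validP'); last by rewrite absP'.
  have -> : (j == l) = false by apply/negbTE/eqP => e; move: hj; rewrite e hl.
  rewrite mulr0; apply: mulr_ge0; last exact: (ch_ge0 Henv hP).
  by rewrite -(tab_fpass pi P th k n); apply: (tab_ge0 Henv hP) => i; exact: (ch_ge0 Henv hP).
rewrite chP'_nn //; apply: ler_pM => //.
- by rewrite mulr_ge0 ?(ch_ge0 Henv hP) // subr_ge0 sig1.
- exact: IH.
- by rewrite ler_piMl ?(ch_ge0 Henv hP) // lerBlDr lerDl sig0.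
Qed.

Lemma transP' k : ~~ absorbing P k -> transient pi P k -> transient pi P' k.
Proof.
move=> hk ht th; apply: le_lt_trans (ht th).
apply: (rsum_le_shift (k := 0)); [exact: (bnd_fpass Henv hP)|exact: (bnd_fpass Henv validP')|].
by move=> N; rewrite addn0; apply: ler_sum => n _; exact: fpass'_le.
Qed.

Local Notation z := (@zs R m).
Definition sg2 : strategy R m := fun i _ => sig i.
Lemma sg2_valid : valid_strategy sg2.
Proof. by move=> i th; exact: hsig. Qed.

Lemma gen_step th t : (forall i, ~~ absorbing P i -> alive pi P' z th t i = alive pi P sg2 th t i) ->
  forall j, alive pi P' z th t.+1 j =
  \sum_(i | ~~ absorbing P i) alive pi P sg2 th t i * sig i * (j == tgt (lab i))%:R +
  \sum_(l | route l == j) alive pi P sg2 th t.+1 l.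
Proof.
move=> IH j; rewrite /=.
rewrite (eq_bigl (fun i => ~~ absorbing P i)); last by move=> i; rewrite absP'.
have -> : \sum_(i | ~~ absorbing P i) alive pi P' z th t i * (1 - z i th) * chainP pi P' th i j =
   \sum_(i | ~~ absorbing P i) (alive pi P sg2 th t i * sig i * (j == tgt (lab i))%:R +
      \sum_(l | route l == j) alive pi P sg2 th t i * (1 - sg2 i th) * chainP pi P th i l).
  apply: eq_bigr => i hi; rewrite IH // chP' // /zs subr0 mulr1 /sg2 mulrDr.
  by rewrite mulrA; congr (_ + _); rewrite mulr_sumr mulr_sumr; apply: eq_bigr => l _; rewrite !mulrA.
rewrite big_split /=; congr (_ + _).
by rewrite exchange_big.
Qed.

Lemma R1 th t j : ~~ absorbing P j -> alive pi P' z th t j = alive pi P sg2 th t j.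
Proof.
elim: t j => [|t IH] j hj; first by rewrite /= sum_route_nonabs.
rewrite gen_step // big1 ?add0r ?sum_route_nonabs //.
by move=> i _; rewrite tgt_neq // mulr0.
Qed.

Lemma tgt_eq x y : (tgt x == tgt y) = (x == y).
Proof.
by case: x; case: y => //=; rewrite ?eqxx // ?(negbTE hAB) // eq_sym (negbTE hAB).
Qed.

Lemma R0 th x : alive pi P' z th 0 (tgt x) =
  \sum_(l | (lab l == x) && absorbing P l) alive pi P sg2 th 0 l.
Proof. by apply: eq_bigl => l; rewrite route_tgt andbC. Qed.

Lemma R2 th t x : alive pi P' z th t.+1 (tgt x) =
  \sum_(i | (lab i == x) && ~~ absorbing P i) alive pi P sg2 th t i * sig i +
  \sum_(l | (lab l == x) && absorbing P l) alive pi P sg2 th t.+1 l.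
Proof.
rewrite gen_step; last by move=> i hi; exact: R1.
congr (_ + _); last by apply: eq_bigl => l; rewrite route_tgt andbC.
rewrite [RHS]big_mkcondl [LHS]big_mkcond [RHS]big_mkcond /=; apply: eq_bigr => i _.
rewrite tgt_eq eq_sym; case: (lab i == x); case: (absorbing P i) => //=; ring.
Qed.

Lemma Kid th x N :
  \sum_(t < N) \sum_(i | lab i == x) alive pi P sg2 th t i * stopw P sg2 th i +
  \sum_(l | (lab l == x) && absorbing P l) alive pi P sg2 th N l =
  \sum_(t < N.+1) alive pi P' z th t (tgt x).
Proof.
elim: N => [|N IH]; first by rewrite big_ord0 add0r big_ord1 R0.
rewrite big_ord_recr [in RHS]big_ord_recr -IH (R2 th N x).
rewrite (bigID (fun i => absorbing P i) (fun i => lab i == x)) /=.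
have -> : \sum_(i | (lab i == x) && absorbing P i) alive pi P sg2 th N i * stopw P sg2 th i =
  \sum_(i | (lab i == x) && absorbing P i) alive pi P sg2 th N i.
  by apply: eq_bigr => i /andP[_ hi]; rewrite /stopw hi mulr1.
have -> : \sum_(i | (lab i == x) && ~~ absorbing P i) alive pi P sg2 th N i * stopw P sg2 th i =
  \sum_(i | (lab i == x) && ~~ absorbing P i) alive pi P sg2 th N i * sig i.
  by apply: eq_bigr => i /andP[_ hi]; rewrite /stopw (negbTE hi).
ring.
Qed.

Lemma endB_ge th x :
  \sum_(i | lab i == x) endprob pi P sg2 th i <= endprob pi P' z th (tgt x).
Proof.
rewrite /endprob -rsum_bigsum; last by move=> i; exact: (bnd_end Henv hP sg2_valid).
have ha : absorbing P' (tgt x) by rewrite absP' tgt_abs.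
rewrite {2}/stopw ha.
apply: (rsum_le_shift (k := 1)).
- by under eq_fun do rewrite mulr1; exact: (bnd_aliveB Henv validP' ha th (@zs_valid R m)).
- by apply: bnd_bigsum => i; exact: (bnd_end Henv hP sg2_valid).
move=> N; rewrite addn1 !series_ord.
under [in X in _ <= X]eq_bigr do rewrite mulr1.
rewrite -Kid lerDl; apply: sumr_ge0 => l _; exact: (alive_ge0 Henv hP sg2_valid).
Qed.

End Cons.

Lemma build (R : realType) (S : finType) (pi : bool -> S -> R) (p : R) (m : nat)
  (P : protocol R S m) (A B : 'I_m) (sig : 'I_m -> R) (lab : 'I_m -> bool) :
  valid_env pi -> 0 < p < 1 -> valid_protocol P ->
  absorbing P A -> absorbing P B -> A != B ->
  #|[set i | absorbing P i]%SET| = 2%N ->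
  (forall i, ~~ absorbing P i -> transient pi P i) ->
  forall hsig : (forall i, 0 <= sig i <= 1),
  valid_protocol (P' P A B sig lab) /\ parsimonious pi (P' P A B sig lab) /\
  best_response pi p (P' P A B sig lab) (@zs R m).
Proof.
move=> Henv hp hP hA hB hAB hcard htr hsig.
have hV := validP' hP A B hsig lab.
have hB' : absorbing (P' P A B sig lab) B by rewrite (absP' hP hA hB hsig).
have hA' : absorbing (P' P A B sig lab) A by rewrite (absP' hP hA hB hsig).
split => //; split; last first.
  by apply: (br_zero Henv hV hB') => // i.
split.
  have e : [set i | absorbing (P' P A B sig lab) i]%SET = [set i | absorbing P i]%SET.
    by apply/setP => i; rewrite !inE (absP' hP hA hB hsig).
  by rewrite e hcard.
split.
  exists A, B; do 3 split => //=; last by rewrite eqxx.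
  by rewrite (negbTE hAB).
move=> i; rewrite (absP' hP hA hB hsig) => hi; split.
  exact: (transP' Henv hP hA hB hsig lab hi (htr i hi)).
rewrite /=; have -> : (i == B) = false by apply/negbTE/eqP => e; move: hi; rewrite e hB.
by [].
Qed.

Lemma split_lab (R : realType) (m : nat) (lab : 'I_m -> bool) (f g : 'I_m -> R) :
  \sum_(i | lab i == true) f i + \sum_(i | lab i == false) g i =
  \sum_i (if lab i then f i else g i).
Proof.
rewrite [RHS](bigID (fun i => lab i) xpredT) /=; congr (_ + _).
  by apply: eq_big => i; [by case: (lab i)|move=> /eqP ->].
by apply: eq_big => i; [by case: (lab i)|move=> /eqP ->].
Qed.

Close Scope classical_set_scope.
Unset Implicit Arguments.

Theorem proposition2 (R : realType) (S : finType) (pi : bool -> S -> R)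
    (p : R) (m : nat) (P : protocol R S m) :
  valid_env pi -> 0 < p < 1 ->
  valid_protocol P -> simple pi P -> ~ parsimonious pi P ->
  exists m' : nat, (m' <= m)%N /\
    exists P' : protocol R S m',
      valid_protocol P' /\ parsimonious pi P' /\
      (exists sg' : strategy R m', best_response pi p P' sg') /\
      (forall (sg : strategy R m) (sg' : strategy R m'),
          best_response pi p P sg -> best_response pi p P' sg' ->
          UR pi p P sg <= UR pi p P' sg').
Proof.
move=> Henv hp hP [hcard htr] _.
have /cards2P [A [B [hAB hset]]] : #|[set i | absorbing P i]%SET| == 2%N by rewrite hcard.
have hA : absorbing P A.
  have : A \in [set i | absorbing P i]%SET by rewrite hset !inE eqxx.
  by rewrite inE.
have hB : absorbing P B.
  have : B \in [set i | absorbing P i]%SET by rewrite hset !inE eqxx orbT.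
  by rewrite inE.
exists m; split => //.
have [[sg0 hbr0]|nobr] := pselect (exists sg, best_response pi p P sg); last first.
  have hsig : forall i : 'I_m, 0 <= (fun _ => 0 : R) i <= 1 by move=> i; rewrite lexx ler01.
  have [h1 [h2 h3]] := @build R S pi p m P A B (fun _ => 0) (fun _ => true) Henv hp hP hA hB hAB hcard htr hsig.
  exists (P' P A B (fun _ => 0) (fun _ => true)); do 3 split => //; first by exists (@zs R m).
  by move=> sg sg' hsg; exfalso; apply: nobr; exists sg.
have vsg0 := hbr0.1.
pose sig := fun i => sg0 i true.
have hsig : forall i, 0 <= sig i <= 1 by move=> i; exact: vsg0.
pose s2 := sg2 sig.
have hs2 : valid_strategy s2 := sg2_valid hsig.
pose eT := fun i => endprob pi P s2 true i.
pose eF := fun i => endprob pi P s2 false i.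
pose lab := fun i => (1 - p) * eF i <= p * eT i.
have [h1 [h2 h3]] := @build R S pi p m P A B sig lab Henv hp hP hA hB hAB hcard htr hsig.
exists (P' P A B sig lab); do 3 split => //; first by exists (@zs R m).
move=> sg sg' hbr hbr'.
have vsg := hbr.1; have vsg' := hbr'.1.
case/andP: (hp) => p0 p1.
have q0 : 0 <= 1 - p by rewrite subr_ge0 ltW.
have hT : probH pi P sg true <= probH pi P s2 true.
  apply: le_trans (br_le hp true hbr0 vsg) _.
  by rewrite (@probH_ext R S pi m P sg0 s2 true).
have hF : probH pi P s2 false <= probH pi P sg false.
  exact: le_trans (br_le hp false hbr0 hs2) (br_le hp false hbr vsg0).
have hL : probL pi P sg false <= 1 - probH pi P sg false.
  rewrite /probL; under eq_bigr do rewrite mulrBr mulr1.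
  rewrite sumrB lerD2r; exact: (sum_endprob_le1 Henv hP vsg false).
have ha : UR pi p P sg <= p * probH pi P s2 true + (1 - p) * (1 - probH pi P s2 false).
  rewrite /UR; apply: lerD; first by apply: ler_wpM2l => //; exact: ltW.
  apply: ler_wpM2l => //; apply: le_trans hL _; exact: lerB.
have hterm : \sum_i eF i = 1.
  by apply: (termination Henv hP hs2) => j hj; exact: (htr j hj false).
have hb : p * probH pi P s2 true + (1 - p) * (1 - probH pi P s2 false) <=
    p * (\sum_(i | lab i == true) eT i) + (1 - p) * (\sum_(i | lab i == false) eF i).
  have e : 1 - probH pi P s2 false = \sum_i eF i * (1 - pact P i).
    rewrite /probH -{1}hterm -sumrB; apply: eq_bigr => i _; rewrite /eF; ring.
  rewrite e /probH !mulr_sumr split_lab -big_split /=.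
  apply: ler_sum => i _.
  have [a0 a1] : 0 <= pact P i /\ pact P i <= 1 by case/andP: (hP.2.2 i).
  rewrite -/(eT i) -/(eF i); case hl: (lab i).
  + have := ler_wpM2r (_ : 0 <= 1 - pact P i) (idP hl); rewrite subr_ge0 => /(_ a1) hh.
    lra.
  + move/negbT: hl; rewrite /lab -ltNge => /ltW hl.
    have := ler_wpM2r a0 hl => hh; lra.
have hB' : absorbing (P' P A B sig lab) B by rewrite (absP' hP hA hB hsig).
have hact : forall i, pact (P' P A B sig lab) i = (i == B)%:R by [].
have c1 : probH pi (P' P A B sig lab) (@zs R m) true <= probH pi (P' P A B sig lab) sg' true.
  exact: (br_le hp true hbr' (@zs_valid R m)).
have c2 : probL pi (P' P A B sig lab) (@zs R m) false <= probL pi (P' P A B sig lab) sg' false.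
  exact: (probL_mono Henv h1 hB' hact false vsg').
have c3 : \sum_(i | lab i == true) eT i <= probH pi (P' P A B sig lab) (@zs R m) true.
  apply: le_trans (endB_ge Henv hP hA hB hAB hsig lab true true) _.
  rewrite /probH (bigD1 B) //= eqxx mulr1 lerDl; apply: sumr_ge0 => i _.
  by rewrite mulr_ge0 ?ler0n // (endprob_ge0 Henv h1 (@zs_valid R m)).
have c4 : \sum_(i | lab i == false) eF i <= probL pi (P' P A B sig lab) (@zs R m) false.
  apply: le_trans (endB_ge Henv hP hA hB hAB hsig lab false false) _.
  rewrite /probL (bigD1 A) //= (negbTE hAB) subr0 mulr1 lerDl; apply: sumr_ge0 => i _.
  rewrite mulr_ge0 ?(endprob_ge0 Henv h1 (@zs_valid R m)) // subr_ge0.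
  by rewrite lern1 leq_b1.
rewrite /UR; apply: le_trans ha _; apply: le_trans hb _.
apply: lerD; apply: ler_wpM2l => //; first exact: ltW.
- exact: le_trans c3 c1.
- exact: le_trans c4 c2.
Qed.
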